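(* For $n\in\mathbb{N}$, \[ B_{2n+1}^{*}=\frac{(-1)^n}{4}+\frac12U_{2n}\!\left(\tfrac12\right)=\frac{(-1)^n}{4}+\frac{1}{\sqrt3}\sin\!\left(\frac{(2n+1)\pi}{3}\right). \]
   Context: $B_r$ denotes the Bernoulli numbers and $B_n^{*}:=\sum_{r=0}^{n}\binom{n+r}{2r}\frac{B_r}{n+r}$ for $n\ge1$ (Zagier's modified Bernoulli numbers). $U_k$ is the Chebyshev polynomial of the second kind, $U_k(\cos\theta)=\frac{\sin((k+1)\theta)}{\sin\theta}$. *)

(* Defs.v *)
From Stdlib Require Import Reals List.
Open Scope R_scope.

(* Bernoulli numbers with the convention B_1 = -1/2, via the standard
   recurrence  B_0 = 1,  B_m = -1/(m+1) * sum_{k=0}^{m-1} C(m+1,k) B_k.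
   bern_list m = [B_0; ...; B_m]. *)
Fixpoint bern_list (m : nat) : list R :=
  match m with
  | O => 1 :: nil
  | S p =>
      let l := bern_list p in
      l ++ ((- / INR (S (S p))) *
            sum_f_R0 (fun k => C (S (S p)) k * nth k l 0) p) :: nil
  end.

Definition bernoulli (n : nat) : R := nth n (bern_list n) 0.

(* Zagier's modified Bernoulli numbers (meaningful for n >= 1):
   B*_n = sum_{r=0}^n binom(n+r, 2r) B_r / (n+r). *)
Definition bstar (n : nat) : R :=
  sum_f_R0 (fun r => C (n + r) (2 * r) * bernoulli r / INR (n + r)) n.

(* Chebyshev polynomials of the second kind:
   U_0 = 1, U_1 = 2x, U_{k+2} = 2x U_{k+1} - U_k.
   chebU_pair k x = (U_k(x), U_{k+1}(x)). *)
Fixpoint chebU_pair (k : nat) (x : R) : R * R :=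
  match k with
  | O => (1, 2 * x)
  | S p => let (a, b) := chebU_pair p x in (b, 2 * x * b - a)
  end.

Definition chebU (k : nat) (x : R) : R := fst (chebU_pair k x).

(* Main.v *)
Require Import Defs.
From Stdlib Require Import Reals Lia Lra.

Section StdlibPart.
Local Open Scope R_scope.

Lemma cheb_step k : chebU_pair (S k) (/ 2) =
  (snd (chebU_pair k (/ 2)), snd (chebU_pair k (/ 2)) - fst (chebU_pair k (/ 2))).
Proof.
simpl. destruct (chebU_pair k (/ 2)) as [a b]. simpl. f_equal. field.
Qed.

Lemma cheb_per k : chebU_pair (k + 6) (/ 2) = chebU_pair k (/ 2).
Proof.
replace (k + 6)%nat with (S (S (S (S (S (S k)))))) by lia.
rewrite !cheb_step. destruct (chebU_pair k (/ 2)) as [a b]. simpl. f_equal; ring.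
Qed.

Definition Psin n := / 2 * chebU (2 * n) (/ 2) = / sqrt 3 * sin (INR (2 * n + 1) * PI / 3).

Lemma sqrt3_nz : sqrt 3 <> 0.
Proof. apply Rgt_not_eq, sqrt_lt_R0. lra. Qed.

Lemma Psin3 n : Psin n -> Psin (n + 3).
Proof.
unfold Psin, chebU. intro H.
replace (2 * (n + 3))%nat with (2 * n + 6)%nat by lia.
rewrite cheb_per, H. f_equal.
replace (INR (2 * n + 6 + 1) * PI / 3) with (INR (2 * n + 1) * PI / 3 + 2 * INR 1 * PI).
- symmetry. apply sin_period.
- replace (2 * n + 6 + 1)%nat with ((2 * n + 1) + 6)%nat by lia.
  rewrite !plus_INR. replace (INR 6) with 6 by (simpl; ring). replace (INR 1) with 1 by (simpl; ring). field.
Qed.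

Lemma Psin012 : Psin 0 /\ Psin 1 /\ Psin 2.
Proof.
pose proof sqrt3_nz as hs.
unfold Psin, chebU. simpl.
repeat split.
+ replace (1 * PI / 3) with (PI / 3) by field. rewrite sin_PI3. field. exact sqrt3_nz.
+ replace ((1 + 1 + 1) * PI / 3) with PI by field. rewrite sin_PI. field. exact sqrt3_nz.
+ replace ((1 + 1 + 1 + 1 + 1) * PI / 3) with (- (PI / 3) + 2 * INR 1 * PI).
  2:{ simpl. field. }
  rewrite sin_period, sin_neg, sin_PI3. field. exact sqrt3_nz.
Qed.

Lemma sin_part n : Psin n.
Proof.
induction n as [n IH] using (well_founded_induction Wf_nat.lt_wf).
destruct Psin012 as [H0 [H1 H2]].
destruct n as [|[|[|m]]]; auto.
replace (S (S (S m))) with (m + 3)%nat by lia. apply Psin3, IH. lia.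
Qed.

End StdlibPart.

From mathcomp Require Import all_boot all_order all_algebra.
From mathcomp Require Import Rstruct zify ring.
Import Order.TTheory GRing.Theory Num.Theory.
Open Scope ring_scope.

Lemma bern_len m : length (bern_list m) = S m.
Proof. elim: m => [|m IH] //=. rewrite List.length_app IH /=. lia. Qed.

Lemma bern_nth_le k m p : (k <= m)%coq_nat -> List.nth k (bern_list (m + p)%nat) (0:R) = List.nth k (bern_list m) (0:R).
Proof.
move=> hk; elim: p => [|p IH]; first by rewrite addn0.
rewrite addnS /= List.app_nth1 //; last (rewrite bern_len; move: hk; rewrite -!plusE; lia). 
Qed.

Lemma bern_nth k m : (k <= m)%coq_nat -> List.nth k (bern_list m) (0:R) = bernoulli k.
Proof.
move=> hk. have -> : m = (k + (m - k))%nat by lia.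
by rewrite bern_nth_le.
Qed.

Lemma bernS p : bernoulli (S p) =
  - (INR (S (S p)))^-1 * sum_f_R0 (fun k => C (S (S p)) k * bernoulli k) p.
Proof.
rewrite /bernoulli /= List.app_nth2 bern_len ?Nat.sub_diag /=; last lia.
congr (_ * _). apply: PartSum.sum_eq => i hi. rewrite bern_nth //.
Qed.

Lemma C_bin n k : (k <= n)%coq_nat -> C n k = ('C(n, k))%:R%R.
Proof.
move=> hk. have hk' : (k <= n)%N by apply/ssrnat.leP.
rewrite /C !factE !INRE.
have := bin_fact hk' => /(congr1 (fun x => x%:R : R)).
rewrite natrM natrM => <-.
rewrite RdivE -mulrA mulfV ?mulr1 //.
by rewrite mulf_eq0 !pnatr_eq0 negb_or -!lt0n !fact_gt0.
Qed.

Lemma bern_rec k : \sum_(j < k.+1) ('C(k.+1, j))%:R * bernoulli j = (k == 0%N)%:R.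
Proof.
case: k => [|p]; first by rewrite big_ord1 bin0 mul1r /bernoulli /=.
rewrite big_ord_recr /= binSn.
have -> : \sum_(i < p.+1) ('C(p.+2, i))%:R * bernoulli i =
          sum_f_R0 (fun k => C (S (S p)) k * bernoulli k) p.
  rewrite sum_f_R0E big_mkord; apply: eq_bigr => i _.
  rewrite C_bin //; have := ltn_ord i; move=> /ssrnat.leP; lia.
rewrite bernS INRE mulrA mulrN mulfV ?mulN1r ?subrr //.
by rewrite pnatr_eq0.
Qed.

Definition Lf (p : {poly R}) : R := \sum_(i < size p) p`_i * bernoulli i.

Definition islin (F : {poly R} -> R) := forall a p q, F (a *: p + q) = a * F p + F q.

Lemma lin0 F : islin F -> F 0 = 0.
Proof. move=> h. have := h 1 0 0. rewrite addr0 scaler0 mul1r => H.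
by apply: (addrI (F 0)); rewrite addr0 -H. Qed.

Lemma linD F : islin F -> forall p q, F (p + q) = F p + F q.
Proof. move=> h p q. by have := h 1 p q; rewrite scale1r mul1r. Qed.

Lemma linZ F : islin F -> forall a p, F (a *: p) = a * F p.
Proof. move=> h a p. by have := h a p 0; rewrite !addr0 (lin0 _ h) addr0. Qed.

Lemma linN F : islin F -> forall p, F (- p) = - F p.
Proof. move=> h p. by rewrite -scaleN1r linZ // mulN1r. Qed.

Lemma linB F : islin F -> forall p q, F (p - q) = F p - F q.
Proof. move=> h p q. by rewrite linD // linN. Qed.

Lemma lin_sum F : islin F -> forall n (G : 'I_n -> {poly R}),
  F (\sum_(i < n) G i) = \sum_(i < n) F (G i).
Proof.
move=> h; elim=> [|n IH] G; first by rewrite !big_ord0 (lin0 _ h).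
by rewrite !big_ord_recr /= linD // IH.
Qed.

Lemma lin_expand F : islin F -> forall p, F p = \sum_(i < size p) p`_i * F 'X^i.
Proof.
move=> h p. rewrite -{1}(coefK p) poly_def lin_sum //.
by apply: eq_bigr => i _; rewrite linZ.
Qed.

Lemma lin_ext F G : islin F -> islin G -> (forall k, F 'X^k = G 'X^k) -> forall p, F p = G p.
Proof.
move=> hF hG h p. rewrite (lin_expand _ hF) (lin_expand _ hG).
by apply: eq_bigr => i _; rewrite h.
Qed.

Lemma Lf_widen n (p : {poly R}) : (size p <= n)%N -> Lf p = \sum_(i < n) p`_i * bernoulli i.
Proof.
move=> h. rewrite /Lf (big_ord_widen n (fun i => p`_i * bernoulli i) h) big_mkcond /=.
apply: eq_bigr => i _; case: ifP => // /negbT; rewrite -leqNgt => hi.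
by rewrite nth_default // mul0r.
Qed.

Lemma Lf_lin : islin Lf.
Proof.
move=> a p q. set n := maxn (size p) (size q).
have hp : (size p <= n)%N by rewrite leq_maxl.
have hq : (size q <= n)%N by rewrite leq_maxr.
have hpq : (size (a *: p + q)%R <= n)%N.
  apply: leq_trans (size_polyD _ _) _. rewrite geq_max hq andbT.
  exact: leq_trans (size_scale_leq _ _) hp.
rewrite (Lf_widen _ _ hpq) (Lf_widen _ _ hp) (Lf_widen _ _ hq) mulr_sumr -big_split /=.
by apply: eq_bigr => i _; rewrite coefD coefZ mulrDl mulrA.
Qed.

Lemma LfXn k : Lf 'X^k = bernoulli k.
Proof.
rewrite (Lf_widen k.+1 _) ?size_polyXn // big_ord_recr /= big1 ?add0r.
  by rewrite coefXn eqxx mul1r.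
by move=> i _; rewrite coefXn (ltn_eqF (ltn_ord i)) mul0r.
Qed.

Lemma comp_Xn k (q : {poly R}) : 'X^k \Po q = q ^+ k.
Proof. by rewrite rmorphXn /= comp_polyX. Qed.

Lemma lin_shiftX F : islin F -> forall k,
  F (('X + 1)^+k) = \sum_(j < k.+1) ('C(k,j))%:R * F 'X^j.
Proof.
move=> h k. rewrite addrC exprDn lin_sum //.
apply: eq_bigr => i _. by rewrite expr1n mul1r -scaler_nat linZ.
Qed.


Lemma islin_comp F (q : {poly R}) : islin F -> islin (fun p => F (p \Po q)).
Proof. move=> h a p r /=. by rewrite comp_polyD comp_polyZ h. Qed.

Lemma islin_dh c : islin (fun p : {poly R} => p^`().[c]).
Proof. move=> a p r /=. by rewrite derivD derivZ hornerD hornerZ. Qed.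

Lemma islin_sub F G : islin F -> islin G -> islin (fun p => F p - G p).
Proof. move=> hF hG a p r /=. rewrite hF hG. ring. Qed.

Lemma shiftL p : Lf (p \Po ('X + 1)) = Lf p + p^`().[0].
Proof.
suff: Lf (p \Po ('X + 1)) - p^`().[0] = Lf p by move=> <-; rewrite subrK.
apply: (lin_ext (fun p => Lf (p \Po ('X + 1)) - p^`().[0])).
- apply: islin_sub; [exact: islin_comp Lf_lin | exact: islin_dh].
- exact: Lf_lin.
move=> k /=. rewrite comp_Xn (lin_shiftX _ Lf_lin) LfXn derivXn hornerMn hornerXn.
under eq_bigr do rewrite LfXn.
case: k => [|p']; first by rewrite big_ord1 bin0 mul1r mulr0n subr0.
rewrite big_ord_recr /= bern_rec binn mul1r /=.
case: p' => [|p'] /=; first by rewrite expr0 mulr1n addrC addrK.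
by rewrite expr0n /= mul0rn subr0 add0r.
Qed.

Lemma bern0 : bernoulli 0 = 1.
Proof. by []. Qed.

Lemma dXn0 k : (('X^(k.+1) : {poly R})^`()).[0] = ((k == 0%N)%:R : R).
Proof.
rewrite derivXn hornerMn hornerXn /=.
by case: k => [|k] /=; rewrite ?expr0 ?mulr1n // expr0n mul0rn.
Qed.

Lemma uniqL F : islin F ->
  (forall p, F (p \Po ('X + 1)) = F p + p^`().[0]) -> forall p, F p = Lf p.
Proof.
move=> hl hs. apply: (lin_ext _ _ hl Lf_lin) => k.
rewrite LfXn. elim/ltn_ind: k => k IH.
have E : \sum_(j < k.+1) ('C(k.+1, j))%:R * F 'X^j = (k == 0%N)%:R.
  have := hs 'X^(k.+1). rewrite comp_Xn (lin_shiftX _ hl) big_ord_recr /= binn mul1r dXn0.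
  by rewrite addrC => /addrI.
have B := bern_rec k.
rewrite big_ord_recr /= in E; rewrite big_ord_recr /= in B.
have Hs : \sum_(i < k) ('C(k.+1, i))%:R * F 'X^i = \sum_(i < k) ('C(k.+1, i))%:R * bernoulli i.
  by apply: eq_bigr => i _; rewrite IH.
rewrite Hs -B in E. move/addrI: E. rewrite binSn => /mulfI; apply.
by rewrite pnatr_eq0.
Qed.

Lemma compXC (q : {poly R}) c : ('X + c%:P) \Po q = q + c%:P.
Proof. by rewrite comp_polyD comp_polyX comp_polyC. Qed.

Lemma reflL p : Lf (p \Po (- 'X)) = Lf p + p^`().[0].
Proof.
suff: Lf (p \Po (- 'X)) - p^`().[0] = Lf p by move=> <-; rewrite subrK.
apply: (uniqL (fun p => Lf (p \Po (- 'X)) - p^`().[0])).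
  apply: islin_sub; [exact: islin_comp Lf_lin | exact: islin_dh].
move=> q /=.
have e1 : ('X + 1) \Po (- 'X) = - 'X + 1 :> {poly R}.
  by rewrite -polyC1 compXC.
have e2 : (- 'X + 1) \Po ('X + 1) = - 'X :> {poly R}.
  by rewrite -polyC1 comp_polyD raddfN /= comp_polyX comp_polyC opprD addrNK.
have := shiftL (q \Po (- 'X + 1)). rewrite -comp_polyA e2 => ->.
rewrite -comp_polyA e1 !deriv_comp !hornerM !horner_comp.
rewrite !derivE !hornerE /= oppr0 add0r subrK mulrN1. by [].
Qed.

Definition V k : {poly R} := \poly_(s < k) ('C(k + s, s.*2.+1))%:R.
Definition Q m : {poly R} := \poly_(r < m.+1) (('C(m + r, r.*2))%:R / (m + r)%:R).

Lemma Vcoef k s : (V k)`_s = ('C(k + s, s.*2.+1))%:R.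
Proof. rewrite coef_poly; case: ltnP => // h; rewrite bin_small //; lia. Qed.

Lemma Qcoef m r : (Q m)`_r = ('C(m + r, r.*2))%:R / (m + r)%:R.
Proof. rewrite coef_poly; case: ltnP => // h; rewrite bin_small ?mul0r //; lia. Qed.

Lemma Vrec k : V k.+2 = ('X + (2%:R)%:P) * V k.+1 - V k.
Proof.
apply/polyP => s. rewrite coefB mulrDl coefD coefXM coefCM !Vcoef.
case: s => [|s] /=.
  rewrite !addn0 !bin1 add0r. apply: (addIr (k%:R)). rewrite subrK -natrM -!natrD.
  congr (_%:R); lia.
set M := (k + s.+1)%N.
have e1 : (k.+2 + s.+1 = M.+2)%N by rewrite /M; lia.
have e2 : (k.+1 + s = M)%N by rewrite /M; lia.
have e3 : (k.+1 + s.+1 = M.+1)%N by rewrite /M; lia.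
rewrite e1 e2 e3 doubleS.
have p1 := binS M.+1 (s.*2.+2).
have p2 := binS M (s.*2.+1).
have p3 := binS M (s.*2.+2).
rewrite p1 p2 p3.
apply: (addIr ('C(M, s.*2.+3))%:R). rewrite subrK -natrM -!natrD.
congr (_%:R). lia.
Qed.

Lemma QV_nat m r : (0 < m)%N ->
  ((m + r) * 'C(m.+1 + r, r.*2.+1) = (m + r) * 'C(m.-1 + r, r.*2.+1) + m.*2 * 'C(m + r, r.*2))%N.
Proof.
move=> hm. case: (leqP r m) => hr; last first.
  rewrite !bin_small; lia.
set a := 'C(m.+1 + r, r.*2.+1). set b := 'C(m.-1 + r, r.*2.+1).
set c := 'C(m + r, r.*2).
have eA := mul_bin_diag (m + r).+1 (r.*2).
have eB := mul_bin_left (m + r).-1 (r.*2).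
have eC := mul_bin_down (m + r) (r.*2).
have e1 : (m.+1 + r = (m + r).+1)%N by lia.
have e2 : (m.-1 + r = (m + r).-1)%N by lia.
rewrite /= -e1 -/a in eA. rewrite -e2 -/b in eB. rewrite -/c in eC.
have e3 : ((m + r).-1 = m.-1 + r)%N by lia.
rewrite e3 in eC.
set d := 'C(m.-1 + r, r.*2) in eB eC.
have hA : (r.*2.+1 * ((m + r) * a) = (m + r) * ((m + r).+1 * c))%N.
  by rewrite mulnCA -eA.
have hB : (r.*2.+1 * ((m + r) * b) = ((m.-1 + r) - r.*2) * (((m + r) - r.*2) * c))%N.
  by rewrite mulnCA eB mulnCA eC.
have key : ((m + r) * (m + r).+1 = ((m.-1 + r) - r.*2) * ((m + r) - r.*2) + r.*2.+1 * m.*2)%N.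
  case: (ltngtP r m) => [hrm|hmr|<-]; [|lia|]; last first.
    have -> : ((r.-1 + r) - r.*2 = 0)%N by lia. rewrite mul0n add0n. nia.
  have [d' ->] : exists d', m = (r + d').+1 by exists (m - r - 1)%N; lia.
  have -> : ((r + d').+1.-1 + r - r.*2 = d')%N by lia.
  have -> : ((r + d').+1 + r - r.*2 = d'.+1)%N by lia.
  rewrite -!muln2. nia.
apply/eqP; rewrite -(eqn_pmul2l (ltn0Sn (r.*2))); apply/eqP.
by rewrite mulnDr hA hB !mulnA -mulnDl key.
Qed.

Lemma QV m : (0 < m)%N -> (m.*2)%:R *: Q m = V m.+1 - V m.-1.
Proof.
move=> hm. apply/polyP => r. rewrite coefZ coefB !Qcoef !Vcoef.
have hN : ((m + r)%:R : R) != 0 by rewrite pnatr_eq0; lia.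
apply: (mulfI hN). rewrite mulrCA (mulrCA (m + r)%:R) mulfV // mulr1.
rewrite mulrBr -!natrM. apply: (addIr ((m + r) * 'C(m.-1 + r, r.*2.+1))%:R).
by rewrite subrK -natrD QV_nat // addnC.
Qed.

Lemma Qderiv m : (Q m)^`() = (2%:R)^-1 *: V m.
Proof.
apply/polyP => s. rewrite coef_deriv coefZ Qcoef Vcoef.
have e := mul_bin_diag (m + s.+1) (s.*2.+1).
have e1 : ((m + s.+1).-1 = m + s)%N by lia.
rewrite e1 in e. rewrite doubleS.
have hN : ((m + s.+1)%:R : R) != 0 by rewrite pnatr_eq0; lia.
have h2 : (2%:R : R) != 0 by rewrite pnatr_eq0.
have eR := congr1 (fun n => n%:R : R) e. rewrite /= !natrM in eR.
have hd : ('C(m + s, s.*2.+1))%:R = (s.*2.+2)%:R * ('C(m + s.+1, s.*2.+2))%:R / (m + s.+1)%:R :> R.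
  by rewrite -eR mulrAC mulfV ?mul1r.
have h22 : ((s.*2.+2)%:R : R) = 2%:R * (s.+1)%:R by rewrite -natrM; congr (_%:R); lia.
rewrite hd h22 -mulr_natr. field. by rewrite nat1r -natrD.
Qed.

Definition rho : {poly R} := - 'X + (- 4%:R)%:P.

Lemma V0 : V 0 = 0.
Proof. by rewrite /V poly_def big_ord0. Qed.

Lemma V1 : V 1 = 1.
Proof.
apply/polyP => s. rewrite Vcoef coef1.
case: s => [|s] //=. rewrite bin_small //. lia.
Qed.

Lemma Vsym k : V k \Po rho = (-1)^+k.+1 *: V k.
Proof.
suff: V k \Po rho = (-1)^+k.+1 *: V k /\ V k.+1 \Po rho = (-1)^+k.+2 *: V k.+1 by case.
elim: k => [|k [IH1 IH2]].
  rewrite V0 V1 comp_poly0 scaler0 -polyC1 comp_polyC. split => //.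
  by rewrite expr2 mulrN1 opprK scale1r.
split => //. rewrite Vrec comp_polyB comp_polyM IH1 IH2.
have -> : ('X + (2%:R)%:P) \Po rho = - ('X + (2%:R)%:P).
  rewrite comp_polyD comp_polyX comp_polyC /rho -addrA -polyCD [- ('X + _)]opprD -polyCN.
  congr (_ + _%:P). ring.
rewrite !exprS -!mul_polyC !polyCM polyCN polyC1. ring.
Qed.


Lemma sgn_odd n : (-1)^+(n.*2.+1) = -1 :> R.
Proof. by rewrite -signr_odd /= odd_double. Qed.

Lemma sgn_odd2 n : (-1)^+(n.*2.+3) = -1 :> R.
Proof. by rewrite -doubleS sgn_odd. Qed.

Lemma Qsym n : Q (n.*2.+1) \Po rho = - Q (n.*2.+1).
Proof.
set m := n.*2.+1.
have hc : ((m.*2)%:R : R) != 0 by rewrite pnatr_eq0 /m; lia.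
have hQ : Q m = ((m.*2)%:R)^-1 *: (V m.+1 - V m.-1).
  by rewrite -QV // scalerA mulVf ?scale1r.
rewrite hQ comp_polyZ comp_polyB !Vsym /m /=.
rewrite sgn_odd2 sgn_odd !scaleN1r.
by rewrite -scalerN opprB opprK addrC.
Qed.

Lemma Vm2 n : (V (n.*2.+1)).[- 2%:R] = (-1)^+n.
Proof.
elim: n => [|n IH]; first by rewrite V1 hornerC expr0.
rewrite doubleS Vrec hornerD hornerN hornerM hornerD hornerX hornerC IH.
rewrite addNr mul0r add0r exprS mulN1r. by [].
Qed.

Lemma Lshift p c : Lf (p \Po ('X + (c + 1)%:P)) = Lf (p \Po ('X + c%:P)) + p^`().[c].
Proof.
have := shiftL (p \Po ('X + c%:P)).
rewrite -comp_polyA compXC -polyC1 -addrA -polyCD [1 + c]addrC => ->.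
by rewrite deriv_comp hornerM horner_comp !derivE !hornerE /=.
Qed.

Lemma LQ n : Lf (Q (n.*2.+1)) =
  (Q (n.*2.+1))^`().[-1] + (Q (n.*2.+1))^`().[- 2%:R] / 2%:R.
Proof.
set q := Q (n.*2.+1).
have s1 := Lshift q (-1). rewrite addNr addr0 comp_polyXr in s1.
have s2 := Lshift q (- 2%:R). rewrite (_ : - 2%:R + 1 = -1 :> R) in s2; last by ring.
have s3 := Lshift q (- 3%:R). rewrite (_ : - 3%:R + 1 = - 2%:R :> R) in s3; last by ring.
have r3 := reflL (q \Po ('X + (- 3%:R)%:P)).
rewrite -comp_polyA compXC deriv_comp hornerM horner_comp !derivE !hornerE /= in r3.
have e : q \Po (- 'X + (- 3%:R)%:P) = - (q \Po ('X + (-1)%:P)).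
  have := congr1 (fun p => p \Po ('X + (-1)%:P)) (Qsym n). rewrite /= -comp_polyA -/q.
  have -> : rho \Po ('X + (-1)%:P) = - 'X + (- 3%:R)%:P.
    rewrite /rho comp_polyD raddfN /= comp_polyX comp_polyC opprD -addrA -polyCN -polyCD.
    congr (_ + _%:P). ring.
  by move=> ->; rewrite raddfN.
rewrite e (linN _ Lf_lin) in r3.
have h2 : (2%:R : R) != 0 by rewrite pnatr_eq0.
apply: (mulIf h2). rewrite mulrDl divfK // s1 s2.
move: r3 s3. set x := Lf (q \Po ('X + (-1)%:P)). set y := Lf (q \Po ('X + (-3%:R)%:P)).
move=> r3 s3. rewrite -/x in s2. rewrite -s2.
have hx : x * 2%:R = q^`().[- 2%:R].
  rewrite s3 -r3 in s2. by rewrite mulr_natr mulr2n {1}s2 addrAC addNr add0r.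
by rewrite mulrDl hx addrC.
Qed.

Lemma two_inv : Rmult 2 (Rinv 2) = 1.
Proof. rewrite RmultE RinvE mulfV //. by rewrite (_ : (2:R) = 2%:R) // pnatr_eq0. Qed.

Lemma cheb_V k : chebU_pair k (Rinv 2) = ((V k.+1).[-1], (V k.+2).[-1]).
Proof.
elim: k => [|k IH].
  rewrite /= V1 hornerC Vrec V1 V0 subr0 mulr1 hornerD hornerX hornerC two_inv.
  congr (_, _). ring.
rewrite cheb_step IH /=. congr (_, _). rewrite RminusE.
rewrite [V k.+3]Vrec hornerD hornerN hornerM hornerD hornerX hornerC.
rewrite (_ : -1 + 2%:R = 1 :> R); last by ring. by rewrite mul1r.
Qed.

Lemma bstar_Lf m : bstar m = Lf (Q m).
Proof.
rewrite /bstar sum_f_R0E big_mkord (Lf_widen m.+1) ?size_poly //.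
apply: eq_bigr => i _. rewrite Qcoef C_bin; last first.
  have := ltn_ord i. move=> h. lia.
have -> : (2 * i)%coq_nat = i.*2 by lia.
rewrite INRE RdivE. rewrite mulrAC. by [].
Qed.

Lemma num_final (u s : R) : (2%:R)^-1 * u + (2%:R)^-1 * s / 2%:R = s / 4%:R + (2%:R)^-1 * u.
Proof. by field. Qed.

Open Scope R_scope.

Theorem corollary5p1 (n : nat) :
  bstar (2 * n + 1) = (-1) ^ n / 4 + / 2 * chebU (2 * n) (/ 2) /\
  (-1) ^ n / 4 + / 2 * chebU (2 * n) (/ 2)
    = (-1) ^ n / 4 + / sqrt 3 * sin (INR (2 * n + 1) * PI / 3).
Proof.
split; last by have := sin_part n; rewrite /Psin => ->.
have e : (2 * n + 1)%nat = n.*2.+1 by lia.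
rewrite e bstar_Lf LQ !Qderiv !hornerZ Vm2.
have e2 : (2 * n)%nat = n.*2 by lia.
rewrite /chebU e2 cheb_V /= RpowE.
have h4 : 4 = (4%:R)%R by rewrite -INRE INR_IZR_INZ. rewrite num_final h4. reflexivity.
Qed.
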